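(* Let $P\subset\mathbb{R}^d$ be a set of $n$ points and $s>1$. Every output $\mathcal{W}$ of the greedy $s$-WSPD algorithm (described in the context), regardless of the order in which pairs are chosen, has size $O(n s^d)$, where the implied constant depends only on $d$.
   Context: Fix $d\ge1$; $|xy|$ is Euclidean distance. For $p\in P$ and $r\ge0$, $B_r(p)=\{x\in P:|px|\le r\}$. Greedy $s$-WSPD algorithm: initially no pair of points is covered and $\mathcal{W}=\emptyset$. Repeat until every pair of distinct points of $P$ is covered: choose an arbitrary pair $(p,q)$ of distinct points not yet covered; add the pair $(B_r(p),B_r(q))$ to $\mathcal{W}$ with $r=|pq|/(2s+2)$; mark every pair $(x,y)$ with $x\in B_r(p)$ and $y\in B_r(q)$ as covered. The size of $\mathcal{W}$ is the number of pairs it contains. (The output is an $s$-well-separated pair decomposition: each pair $(A,B)$ satisfies $\min_{x\in A,y\in B}|xy|\ge s\max(\mathrm{diam} A,\mathrm{diam} B)$ and every pair of points is covered.) *)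

(* Defs.v *)
From HB Require Import structures.
From mathcomp Require Import all_boot all_order all_algebra.
From mathcomp Require Import Rstruct.
From Stdlib Require Rdefinitions.

Set Implicit Arguments.
Unset Strict Implicit.
Unset Printing Implicit Defensive.

Import Order.TTheory GRing.Theory Num.Theory.
Local Open Scope ring_scope.

Notation point d := 'rV[Rdefinitions.R]_d.

Definition edist (d : nat) (x y : point d) : Rdefinitions.R :=
  (@Num.sqrt Rdefinitions.R) (\sum_(i < d) (x ord0 i - y ord0 i) ^+ 2).

Definition in_ball (d : nat) (P : seq (point d)) (p : point d) (r : Rdefinitions.R)
  (x : point d) : bool :=
  (x \in P) && (edist p x <= r).

Definition wspd_radius (d : nat) (s : Rdefinitions.R) (pq : point d * point d) : Rdefinitions.R :=
  edist pq.1 pq.2 / (2 * s + 2).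

Definition covers (d : nat) (P : seq (point d)) (s : Rdefinitions.R)
  (pq : point d * point d) (x y : point d) : bool :=
  let r := wspd_radius s pq in
  (in_ball P pq.1 r x && in_ball P pq.2 r y) ||
  (in_ball P pq.2 r x && in_ball P pq.1 r y).

Definition covered (d : nat) (P : seq (point d)) (s : Rdefinitions.R)
  (ws : seq (point d * point d)) (x y : point d) : bool :=
  has (fun pq => covers P s pq x y) ws.

(* The output W consists of
   the pairs (B_r(p_i), B_r(q_i)), one per iteration. *)
Definition greedy_run (d : nat) (P : seq (point d)) (s : Rdefinitions.R)
  (run : seq (point d * point d)) : Prop :=
  (forall i, (i < size run)%N ->
     let pq := nth (0, 0) run i in
     [/\ pq.1 \in P, pq.2 \in P, pq.1 != pq.2
       & ~~ covered P s (take i run) pq.1 pq.2]) /\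
  (forall x y, x \in P -> y \in P -> x != y -> covered P s run x y).

Definition wspd_size (d : nat) (run : seq (point d * point d)) : nat :=
  size run.

(* Main.v *)
Require Import Defs.
From HB Require Import structures.
From mathcomp Require Import all_boot all_order all_algebra.
From mathcomp Require Import Rstruct.
From mathcomp Require Import ring lra zify.
From Stdlib Require Rdefinitions.
Import Order.TTheory GRing.Theory Num.Theory.
Local Open Scope ring_scope.
Set Implicit Arguments.
Unset Strict Implicit.
Unset Printing Implicit Defensive.
Local Notation R := Rdefinitions.R.
Lemma cs_ineq (d : nat) (a b : 'I_d -> R) :
  (\sum_i a i * b i) ^+ 2 <= (\sum_i a i ^+ 2) * (\sum_i b i ^+ 2).
Proof.
have H : 0 <= \sum_i \sum_j (a i * b j - a j * b i) ^+ 2.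
  by apply: sumr_ge0 => i _; apply: sumr_ge0 => j _; exact: sqr_ge0.
have E : \sum_i \sum_j (a i * b j - a j * b i) ^+ 2 =
   (\sum_i a i ^+ 2) * (\sum_i b i ^+ 2) + (\sum_i b i ^+ 2) * (\sum_i a i ^+ 2)
   - 2 * (\sum_i a i * b i) ^+ 2.
  have E1 : forall i j, (a i * b j - a j * b i) ^+ 2 =
     a i ^+ 2 * b j ^+ 2 + b i ^+ 2 * a j ^+ 2 - 2 * ((a i * b i) * (a j * b j)).
    by move=> i j; ring.
  under eq_bigr => i _ do under eq_bigr => j _ do rewrite E1.
  rewrite expr2 !mulr_suml.
  rewrite mulr_sumr -sumrN -!big_split /=.
  apply: eq_bigr => i _.
  rewrite -mulrA !mulr_sumr -sumrN -!big_split /=.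
  by apply: eq_bigr => j _; ring.
lra.
Qed.
Lemma edist_ge0 (d : nat) (x y : point d) : 0 <= edist x y.
Proof. exact: sqrtr_ge0. Qed.

Lemma sumsq_ge0 (d : nat) (x y : point d) :
  0 <= \sum_(i < d) (x ord0 i - y ord0 i) ^+ 2.
Proof. by apply: sumr_ge0 => i _; exact: sqr_ge0. Qed.

Lemma edist_sq (d : nat) (x y : point d) :
  edist x y ^+ 2 = \sum_(i < d) (x ord0 i - y ord0 i) ^+ 2.
Proof. by rewrite /edist sqr_sqrtr // sumsq_ge0. Qed.

Lemma edistxx (d : nat) (x : point d) : edist x x = 0.
Proof.
rewrite /edist (eq_bigr (fun _ => 0)); first by rewrite big1 // sqrtr0.
by move=> i _; rewrite subrr expr0n.
Qed.

Lemma edistC (d : nat) (x y : point d) : edist x y = edist y x.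
Proof.
by rewrite /edist; congr Num.sqrt; apply: eq_bigr => i _; rewrite -sqrrN opprB.
Qed.

Lemma edist_tri (d : nat) (x y z : point d) :
  edist x z <= edist x y + edist y z.
Proof.
set a := fun i : 'I_d => x ord0 i - y ord0 i.
set b := fun i : 'I_d => y ord0 i - z ord0 i.
have e1 := edist_ge0 x y; have e2 := edist_ge0 y z.
have E1 : edist x y ^+ 2 = \sum_i a i ^+ 2 by rewrite edist_sq.
have E2 : edist y z ^+ 2 = \sum_i b i ^+ 2 by rewrite edist_sq.
have E3 : edist x z ^+ 2 = \sum_i a i ^+ 2 + \sum_i b i ^+ 2 + 2 * \sum_i a i * b i.
  rewrite edist_sq mulr_sumr -!big_split /=; apply: eq_bigr => i _.
  rewrite /a /b; ring.
have CS := cs_ineq a b.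
rewrite -E1 -E2 in CS E3.
set C := \sum_i a i * b i in CS E3.
have HC : C <= edist x y * edist y z.
  have h0 : 0 <= edist x y * edist y z by exact: mulr_ge0.
  nra.
have h3 := edist_ge0 x z.
nra.
Qed.

Lemma coord_le (d : nat) (x y : point d) (i : 'I_d) :
  `|x ord0 i - y ord0 i| <= edist x y.
Proof.
have h := edist_ge0 x y.
have H : (x ord0 i - y ord0 i) ^+ 2 <= edist x y ^+ 2.
  rewrite edist_sq (bigD1 i) //= lerDl.
  by apply: sumr_ge0 => j _; exact: sqr_ge0.
rewrite -(ler_pXn2r (n:=2)) // ?nnegrE //.
by rewrite real_normK // num_real.
Qed.

Lemma edist_eq0 (d : nat) (x y : point d) : edist x y = 0 -> x = y.
Proof.
move=> H.
have H2 : \sum_(i < d) (x ord0 i - y ord0 i) ^+ 2 = 0 by rewrite -edist_sq H expr0n.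
apply/rowP => i.
have := @psumr_eq0P _ _ xpredT (fun j => (x ord0 j - y ord0 j) ^+ 2)
  (fun j _ => sqr_ge0 _) H2 i isT.
by move/eqP; rewrite sqrf_eq0 subr_eq0 => /eqP.
Qed.
Definition mindf (d : nat) (y : point d) (v : R) (s : seq (point d)) : R :=
  foldr (fun x m => Num.min (edist y x) m) v s.
Definition mind (d : nat) (s : seq (point d)) (y : point d) : R :=
  mindf y (edist y (head 0 s)) s.

Lemma mindf_le (d : nat) (y : point d) v s x : x \in s -> mindf y v s <= edist y x.
Proof.
elim: s => [//|z s IH]; rewrite inE /= => /orP [/eqP ->|xs].
  by rewrite ge_min lexx.
by rewrite ge_min (IH xs) orbT.
Qed.

Lemma mindf_ge (d : nat) (y : point d) v s b :
  b <= v -> (forall x, x \in s -> b <= edist y x) -> b <= mindf y v s.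
Proof.
move=> bv; elim: s => [//|z s IH] H /=.
rewrite le_min H ?inE ?eqxx // IH // => x xs; apply: H; by rewrite inE xs orbT.
Qed.

Lemma mindf_gt (d : nat) (y : point d) v s b :
  b < v -> (forall x, x \in s -> b < edist y x) -> b < mindf y v s.
Proof.
move=> bv; elim: s => [//|z s IH] H /=.
rewrite lt_min H ?inE ?eqxx // IH // => x xs; apply: H; by rewrite inE xs orbT.
Qed.

Lemma mindf_att (d : nat) (y : point d) v s :
  mindf y v s = v \/ exists2 x, x \in s & mindf y v s = edist y x.
Proof.
elim: s => [|z s IH] /=; first by left.
case: (leP (edist y z) (mindf y v s)) => h.
  by right; exists z; rewrite ?inE ?eqxx //; rewrite (min_idPl h).
case: IH => [->|[x xs ->]]; first by left.
by right; exists x => //; rewrite inE xs orbT.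
Qed.

Lemma mind_le (d : nat) (s : seq (point d)) y x : x \in s -> mind s y <= edist y x.
Proof. exact: mindf_le. Qed.

Lemma mind_gt (d : nat) (s : seq (point d)) y b :
  s != [::] -> (forall x, x \in s -> b < edist y x) -> b < mind s y.
Proof.
case: s => [//|z s] _ H; apply: mindf_gt => //; apply: H; exact: mem_head.
Qed.

Lemma mind_ge (d : nat) (s : seq (point d)) y b :
  s != [::] -> (forall x, x \in s -> b <= edist y x) -> b <= mind s y.
Proof.
case: s => [//|z s] _ H; apply: mindf_ge => //; apply: H; exact: mem_head.
Qed.

Lemma mind_att (d : nat) (s : seq (point d)) y :
  s != [::] -> exists2 x, x \in s & mind s y = edist y x.
Proof.
case: s => [//|z s] _; rewrite /mind.
case: (mindf_att y (edist y (head 0 (z :: s))) (z :: s)) => [->|//].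
by exists z => //; exact: mem_head.
Qed.

Lemma mind_sub (d : nat) (s s' : seq (point d)) y :
  s != [::] -> {subset s <= s'} -> mind s' y <= mind s y.
Proof.
move=> ne sub; have [x xs ->] := mind_att y ne; apply: mind_le; exact: sub.
Qed.

Lemma argmax_seq (T : eqType) (f : T -> R) (s : seq T) :
  s != [::] -> exists2 x, x \in s & forall y, y \in s -> f y <= f x.
Proof.
elim: s => [//|z s IH] _.
case: (eqVneq s [::]) => [->|ne].
  by exists z; rewrite ?mem_head // => y; rewrite inE => /eqP ->.
have [x xs Hx] := IH ne.
case: (leP (f z) (f x)) => h.
  exists x; first by rewrite inE xs orbT.
  by move=> y; rewrite inE => /orP [/eqP ->|/Hx].
exists z; first exact: mem_head.
move=> y; rewrite inE => /orP [/eqP ->//|/Hx hy]; exact: le_trans hy (ltW h).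
Qed.

Definition FP (d : nat) (P X : seq (point d)) :=
  forall i, (0 < i < size X)%N -> forall y, y \in P ->
    mind (take i X) y <= mind (take i X) (X`_i).

Lemma FP_exists (d : nat) (P : seq (point d)) : uniq P ->
  forall k, (k <= size P)%N ->
  exists X, [/\ uniq X, {subset X <= P}, size X = k & FP P X].
Proof.
move=> uP; elim=> [|k IH] kP.
  by exists [::]; split => // i /andP [/ltn_trans h /h].
have [X [uX sX szX fX]] := IH (ltnW kP).
pose Q := [seq y <- P | y \notin X].
have neQ : Q != [::].
  apply/eqP => Q0.
  have : {subset P <= X}.
    move=> y yP; apply/negPn/negP => yX.
    have : y \in Q by rewrite mem_filter yX.
    by rewrite Q0.
  move=> /(uniq_leq_size uP); rewrite szX => h.
  by move: (leq_ltn_trans h kP); rewrite ltnn.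
have [ys ysQ Hys] := argmax_seq (mind X) neQ.
move: ysQ; rewrite mem_filter => /andP [ysX ysP].
exists (rcons X ys); split.
- by rewrite rcons_uniq ysX uX.
- by move=> z; rewrite mem_rcons inE => /orP [/eqP ->//|/sX].
- by rewrite size_rcons szX.
move=> i /andP [i0]; rewrite size_rcons ltnS leq_eqVlt => /orP [/eqP ei|ilt].
  rewrite ei -cats1 take_size_cat // nth_cat ltnn subnn /=.
  move=> y yP; case: (boolP (y \in X)) => yX.
    have ne : X != [::] by apply/eqP => h; rewrite h in yX.
    apply: (le_trans (mind_le y yX)); rewrite edistxx.
    apply: mind_ge => // x _; exact: edist_ge0.
  by apply: Hys; rewrite mem_filter yX.
rewrite -cats1 takel_cat ?(ltnW ilt) // nth_cat ilt.
by apply: fX; rewrite i0 ilt.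
Qed.
Lemma packing (d : nat) (hd : (1 <= d)%N) (pts : nat -> point d) (c : point d)
  (rho Rr : R) (J : seq nat) :
  0 < rho -> 0 <= Rr -> uniq J ->
  (forall e, e \in J -> edist c (pts e) <= Rr) ->
  (forall e e', e \in J -> e' \in J -> e != e' -> rho <= edist (pts e) (pts e')) ->
  (size J <= (Num.truncn (4 * d%:R * Rr / rho)).+1 ^ d)%N.
Proof.
move=> rho0 R0 uJ Hb Hs.
set B := 4 * d%:R * Rr / rho.
set k := 2 * d%:R / rho.
have k0 : 0 < k by rewrite /k divr_gt0 // mulr_gt0 // ltr0n.
pose u e (i : 'I_d) := (pts e ord0 i - c ord0 i + Rr) * k.
have u0 : forall e i, e \in J -> 0 <= u e i.
  move=> e i eJ; rewrite /u mulr_ge0 ?(ltW k0) //.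
  have := le_trans (coord_le c (pts e) i) (Hb e eJ).
  rewrite ler_norml => /andP [h1 h2]; lra.
have uB : forall e i, e \in J -> u e i <= B.
  move=> e i eJ; rewrite /u /B.
  have := le_trans (coord_le c (pts e) i) (Hb e eJ).
  rewrite ler_norml => /andP [h1 h2].
  have -> : 4 * d%:R * Rr / rho = (2 * Rr) * k by rewrite /k; field; exact: lt0r_neq0.
  rewrite ler_pM2r //; lra.
pose cell e : {ffun 'I_d -> 'I_(Num.truncn B).+1} :=
  [ffun i => inord (Num.truncn (u e i))].
have tr_lt : forall e i, e \in J -> (Num.truncn (u e i) < (Num.truncn B).+1)%N.
  move=> e i eJ; rewrite ltnS truncn_le_nat.
  have := truncnS_gt B; have := uB e i eJ; lra.
have inj : {in J &, injective cell}.
  move=> e e' eJ e'J Hc; apply/eqP/negPn/negP => ne.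
  have Hi : forall i, Num.truncn (u e i) = Num.truncn (u e' i).
    move=> i; have := congr1 (fun f : {ffun 'I_d -> 'I_(Num.truncn B).+1} => val (f i)) Hc; rewrite /= !ffunE.
    by rewrite !inordK ?tr_lt.
  have Hw : forall i, (pts e ord0 i - pts e' ord0 i) ^+ 2 * k ^+ 2 <= 1.
    move=> i; have := truncn_itv (u0 e i eJ); have := truncn_itv (u0 e' i e'J).
    rewrite (Hi i) /u => /andP [a1 a2] /andP [b1 b2].
    set w := pts e ord0 i - pts e' ord0 i.
    have hw : `|w * k| <= 1.
      rewrite ler_norml; apply/andP; split.
      - have -> : w * k = (pts e ord0 i - c ord0 i + Rr) * k
                         - (pts e' ord0 i - c ord0 i + Rr) * k by rewrite /w; ring.
        rewrite -natr1 in a2 b2; lra.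
      - have -> : w * k = (pts e ord0 i - c ord0 i + Rr) * k
                         - (pts e' ord0 i - c ord0 i + Rr) * k by rewrite /w; ring.
        rewrite -natr1 in a2 b2; lra.
    have : (w * k) ^+ 2 <= 1.
      rewrite -(expr1n _ 2) -real_normK ?num_real //.
      by rewrite ler_pXn2r ?nnegrE ?normr_ge0 //.
    by rewrite exprMn.
  have Hsum : edist (pts e) (pts e') ^+ 2 * k ^+ 2 <= d%:R.
    rewrite edist_sq mulr_suml.
    apply: le_trans (ler_sum _ (fun i _ => Hw i)) _.
    by rewrite sumr_const card_ord.
  have hr := Hs e e' eJ e'J ne.
  have hr2 : rho ^+ 2 <= edist (pts e) (pts e') ^+ 2.
    by rewrite ler_pXn2r ?nnegrE ?(ltW rho0) ?edist_ge0.
  have hk : rho ^+ 2 * k ^+ 2 = 4 * d%:R ^+ 2.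
    by rewrite /k; field; exact: lt0r_neq0.
  have D1 : 1 <= d%:R :> R by rewrite ler1n.
  have : rho ^+ 2 * k ^+ 2 <= d%:R.
    apply: le_trans Hsum; rewrite ler_pM2r //; exact: exprn_gt0.
  rewrite hk; nra.
have := map_inj_in_uniq inj; rewrite uJ => uM.
rewrite -(size_map cell) -(card_uniqP uM).
apply: leq_trans (max_card _) _.
by rewrite card_ffun !card_ord.
Qed.
Definition lam (d : nat) (X : seq (point d)) (k : nat) : R := mind (take k X) X`_k.

Lemma mem_take_nth (d : nat) (X : seq (point d)) j k :
  (j < k)%N -> (k <= size X)%N -> X`_j \in take k X.
Proof.
move=> jk kX; rewrite -(nth_take 0 jk); apply: mem_nth.
by rewrite size_takel.
Qed.

Lemma take_nth_mem (d : nat) (X : seq (point d)) k x :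
  x \in take k X -> exists2 j, (j < k)%N & x = X`_j.
Proof.
move=> /(nthP 0) [j]; rewrite size_take_min leq_min => /andP [jk _] <-.
by exists j => //; rewrite nth_take.
Qed.

Lemma lam_le_dist (d : nat) (X : seq (point d)) j k :
  (j < k)%N -> (k < size X)%N -> lam X k <= edist X`_j X`_k.
Proof.
move=> jk kX; rewrite edistC; apply: mind_le; apply: mem_take_nth => //.
exact: ltnW.
Qed.

Lemma lam_mono (d : nat) (P X : seq (point d)) :
  FP P X -> {subset X <= P} -> forall k c, (0 < k)%N -> (k <= c)%N ->
  (c < size X)%N -> lam X c <= lam X k.
Proof.
move=> fX sX k c k0 kc cX.
have ne : take k X != [::].
  by rewrite -size_eq0 size_takel ?(leq_trans kc (ltnW cX)) // -lt0n.
apply: le_trans (fX k _ X`_c _).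
- rewrite /lam; apply: mind_sub => // x.
  rewrite -(take_takel X kc); exact: mem_take.
- by rewrite k0 (leq_ltn_trans kc cX).
- by apply: sX; apply: mem_nth.
Qed.

Lemma find_props (d : nat) (P X : seq (point d)) (p : point d) (t : R) :
  FP P X -> p \in P -> p \in X -> 0 <= t ->
  let m := find (fun x => edist p x <= t) X in
  [/\ (m < size X)%N, edist p X`_m <= t & (0 < m)%N -> t < lam X m].
Proof.
move=> fX pP pX t0 m.
have hs : has (fun x => edist p x <= t) X.
  by apply/hasP; exists p => //; rewrite edistxx.
have mX : (m < size X)%N by rewrite -has_find.
split => //; first exact: (nth_find 0 hs).
move=> m0.
apply: lt_le_trans (fX m _ p pP); last by rewrite m0 mX.
apply: mind_gt.
  by rewrite -size_eq0 size_takel ?(ltnW mX) // -lt0n.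
move=> x /take_nth_mem [j jm ->].
by have := before_find 0 jm; rewrite /= => /negbT; rewrite -ltNge.
Qed.
Lemma maxmin_eq (a b c e : nat) : maxn a b = maxn c e -> minn a b = minn c e ->
  (a = c /\ b = e) \/ (a = e /\ b = c).
Proof. lia. Qed.

Lemma close_lemma (d : nat) (kap : R) (p q p' q' a b : point d) :
  12 <= kap ->
  edist p a <= edist p q / kap -> edist q b <= edist p q / kap ->
  edist p' a <= edist p' q' / kap -> edist q' b <= edist p' q' / kap ->
  edist p p' <= 3 * (edist p q / kap) /\ edist q q' <= 3 * (edist p q / kap).
Proof.
move=> hk h1 h2 h3 h4.
set L := edist p q in h1 h2 *; set L' := edist p' q' in h3 h4.
have k0 : 0 < kap by lra.
have hL0 : 0 <= L by exact: edist_ge0.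
have hL'0 : 0 <= L' by exact: edist_ge0.
have Hab : edist a b <= L + 2 * (L / kap).
  have t1 := edist_tri a p b; have t2 := edist_tri p q b.
  rewrite edistC in h1; rewrite -/L in t2; lra.
have HL' : L' <= L' / kap * 2 + L + 2 * (L / kap).
  have t1 := edist_tri p' a q'; have t2 := edist_tri a b q'.
  rewrite edistC in h4; rewrite -/L' in t1 *; lra.
set A := L / kap in h1 h2 Hab HL' *; set A' := L' / kap in h3 h4 HL'.
have eL : L = kap * A by rewrite /A mulrC divfK // lt0r_neq0.
have eL' : L' = kap * A' by rewrite /A' mulrC divfK // lt0r_neq0.
have A0 : 0 <= A by rewrite /A divr_ge0 // ltW.
have A'0 : 0 <= A' by rewrite /A' divr_ge0 // ltW.
rewrite eL' eL in HL'.
have HA : A' <= 2 * A by nra.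
have t1 := edist_tri p a p'; have t2 := edist_tri q b q'.
rewrite (edistC a p') in t1; rewrite (edistC b q') in t2.
split; lra.
Qed.
Lemma img_case (d : nat) (X : seq (point d)) (s t : R) (p q : point d) ma mb :
  1 < s -> 0 < t -> edist p q <= (6 * s + 6) * t ->
  edist p X`_ma <= t -> edist q X`_mb <= t -> t < lam X mb ->
  (0 < lam X mb) && (edist X`_mb X`_ma <= (6 * s + 8) * lam X mb).
Proof.
move=> s1 t0 hpq h1 h2 hl; apply/andP; split; first exact: lt_trans hl.
have t1 := edist_tri X`_mb q X`_ma; have t2 := edist_tri q p X`_ma.
rewrite (edistC X`_mb q) in t1; rewrite (edistC q p) in t2.
have : (6 * s + 8) * t <= (6 * s + 8) * lam X mb.
  by rewrite ler_pM2l ?ltW //; lra.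
lra.
Qed.

Lemma sumn_bound (f : nat -> nat) (l : seq nat) K :
  (forall x, x \in l -> (f x <= K)%N) -> (sumn (map f l) <= size l * K)%N.
Proof.
elim: l => [//|x l IH] H /=.
rewrite mulSn leq_add ?H ?mem_head // IH // => y yl; apply: H.
by rewrite inE yl orbT.
Qed.

Theorem theorem8 (d : nat) (hd : (1 <= d)%N) :
  exists C : Rdefinitions.R, 0 < C /\
    forall (P : seq 'rV[Rdefinitions.R]_d) (s : Rdefinitions.R), uniq P -> 1 < s ->
    forall run : seq ('rV[Rdefinitions.R]_d * 'rV[Rdefinitions.R]_d), greedy_run P s run ->
      (wspd_size run)%:R <= C * (size P)%:R * s ^+ d.
Proof.
exists ((57 * d%:R) ^+ d); split.
  by apply: exprn_gt0; rewrite mulr_gt0 // ltr0n.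
move=> P s uP s1 run [Hrun _].
set n := size P.
have [X [uX sX szX fX]] := FP_exists uP (leqnn n).
have pX : forall p, p \in P -> p \in X.
  have [_ E] := uniq_min_size uX sX (eq_leq (esym szX)).
  by move=> p; rewrite E.
set kap := 3 * (2 * s + 2).
have hk : 12 <= kap by rewrite /kap; lra.
have k0 : 0 < kap by lra.
pose pq i := nth (0, 0) run i.
pose L i := edist (pq i).1 (pq i).2.
pose t i := L i / kap.
pose mp i := find (fun x => edist (pq i).1 x <= t i) X.
pose mq i := find (fun x => edist (pq i).2 x <= t i) X.
pose img i := (maxn (mp i) (mq i), minn (mp i) (mq i)).
have HR : forall i, (i < size run)%N ->
  [/\ (pq i).1 \in P, (pq i).2 \in P, (pq i).1 != (pq i).2
    & ~~ covered P s (take i run) (pq i).1 (pq i).2] by exact: Hrun.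
have tpos : forall i, (i < size run)%N -> 0 < t i.
  move=> i hi; have [_ _ ne _] := HR i hi.
  rewrite /t divr_gt0 // lt_neqAle edist_ge0 andbT eq_sym.
  by apply/negP => /eqP /edist_eq0 E; rewrite E eqxx in ne.
have Fp : forall i, (i < size run)%N ->
  [/\ (mp i < n)%N, edist (pq i).1 X`_(mp i) <= t i
    & (0 < mp i)%N -> t i < lam X (mp i)].
  move=> i hi; have [pP _ _ _] := HR i hi.
  rewrite -szX; exact: find_props fX pP (pX _ pP) (ltW (tpos i hi)).
have Fq : forall i, (i < size run)%N ->
  [/\ (mq i < n)%N, edist (pq i).2 X`_(mq i) <= t i
    & (0 < mq i)%N -> t i < lam X (mq i)].
  move=> i hi; have [_ qP _ _] := HR i hi.
  rewrite -szX; exact: find_props fX qP (pX _ qP) (ltW (tpos i hi)).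
have Lt : forall i, L i = kap * t i.
  by move=> i; rewrite /t mulrC divfK // lt0r_neq0.
have neq : forall i, (i < size run)%N -> mp i != mq i.
  move=> i hi; apply/negP => /eqP E.
  have [_ h1 _] := Fp i hi; have [_ h2 _] := Fq i hi.
  rewrite -E in h2.
  have := edist_tri (pq i).1 X`_(mp i) (pq i).2; rewrite (edistC X`_(mp i)).
  rewrite -/(L i) Lt; have := tpos i hi; nra.
have inj : forall i j, (i < j)%N -> (j < size run)%N -> img i != img j.
  move=> i j ij jr; have ir := ltn_trans ij jr.
  apply/negP => /eqP [E1 E2].
  have [_ _ _ Hnc] := HR j jr.
  apply: (negP Hnc); apply/hasP; exists (pq i).
    rewrite /pq -(nth_take (0, 0) ij); apply: mem_nth.
    by rewrite size_takel // ltnW.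
  have [pjP qjP _ _] := HR j jr.
  have [_ hpi _] := Fp i ir; have [_ hqi _] := Fq i ir.
  have [_ hpj _] := Fp j jr; have [_ hqj _] := Fq j jr.
  have er : wspd_radius s (pq i) = 3 * (edist (pq i).1 (pq i).2 / kap).
    have h2 : 2 * s + 2 != 0 by rewrite lt0r_neq0 //; lra.
    by rewrite /wspd_radius /kap /L; field.
  rewrite /covers /in_ball er pjP qjP /=.
  case: (maxmin_eq E1 E2) => [[h1 h2]|[h1 h2]].
  - rewrite h1 in hpi; rewrite h2 in hqi.
    have [c1 c2] := close_lemma (p := (pq i).1) (q := (pq i).2)
      (p' := (pq j).1) (q' := (pq j).2) hk hpi hqi hpj hqj.
    by rewrite c1 c2.
  - rewrite h1 in hpi; rewrite h2 in hqi.
    rewrite /t /L [edist (pq j).1 (pq j).2]edistC in hpj hqj.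
    have [c1 c2] := close_lemma (p := (pq i).1) (q := (pq i).2)
      (p' := (pq j).2) (q' := (pq j).1) hk hpi hqi hqj hpj.
    by rewrite c1 c2 orbT.
pose Qf c e := (0 < lam X c) && (edist X`_c X`_e <= (6 * s + 8) * lam X c).
pose S := [seq (c, e) | c <- iota 0 n, e <- filter (Qf c) (iota 0 c)].
have imgS : forall i, (i < size run)%N -> img i \in S.
  move=> i hi; apply/allpairsPdep.
  have [mpn hp lp] := Fp i hi; have [mqn hq lq] := Fq i hi.
  have hpq : L i <= (6 * s + 6) * t i by rewrite Lt /kap; lra.
  have ti := tpos i hi.
  case: (ltngtP (mp i) (mq i)) => h; last by have := neq i hi; rewrite h eqxx.
  - exists (mq i), (mp i); split.
    + by rewrite mem_iota.
    + rewrite mem_filter mem_iota h /= andbT.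
      apply: (img_case s1 ti hpq hp hq); apply: lq; exact: leq_ltn_trans h.
    + by rewrite /img; congr pair; lia.
  - exists (mp i), (mq i); split.
    + by rewrite mem_iota.
    + rewrite mem_filter mem_iota h /= andbT.
      have hqp : edist (pq i).2 (pq i).1 <= (6 * s + 6) * t i by rewrite edistC.
      apply: (img_case s1 ti hqp hq hp); apply: lp; exact: leq_ltn_trans h.
    + by rewrite /img; congr pair; lia.
have U : uniq (map img (iota 0 (size run))).
  rewrite map_inj_in_uniq ?iota_uniq // => i j.
  rewrite !mem_iota !add0n => /andP [_ hi] /andP [_ hj] E.
  case: (ltngtP i j) => // h.
  - by move: (inj i j h hj); rewrite E eqxx.
  - by move: (inj j i h hi); rewrite E eqxx.
have Hsub : {subset map img (iota 0 (size run)) <= S}.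
  move=> z /mapP [i]; rewrite mem_iota add0n => /andP [_ hi] ->; exact: imgS.
have Hle := uniq_leq_size U Hsub; rewrite size_map size_iota in Hle.
set B := 4 * d%:R * (6 * s + 8).
have B0 : 0 <= B by rewrite /B mulr_ge0 // ?mulr_ge0 //; lra.
set M0 := (Num.truncn B).+1.
have HS : (size S <= n * M0 ^ d)%N.
  rewrite size_allpairs_dep -{2}(size_iota 0 n).
  apply: sumn_bound => c; rewrite mem_iota add0n => /andP [_ cn].
  case: (boolP (0 < lam X c)) => l0; last first.
    rewrite (@eq_filter _ (Qf c) pred0) ?filter_pred0 //.
    by move=> e; rewrite /Qf (negbTE l0).
  have := @packing d hd (fun e => X`_e) X`_c (lam X c) ((6 * s + 8) * lam X c)
    (filter (Qf c) (iota 0 c)) l0.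
  have -> : 4 * d%:R * ((6 * s + 8) * lam X c) / lam X c = B.
    by rewrite /B; field; exact: lt0r_neq0.
  apply.
  - by rewrite mulr_ge0 ?ltW //; lra.
  - exact: filter_uniq (iota_uniq 0 c).
  - by move=> e; rewrite mem_filter => /andP [/andP [_ h] _].
  - move=> e e'; rewrite !mem_filter !mem_iota !add0n.
    move=> /andP [_ ec] /andP [_ e'c] ne.
    have cX : (c < size X)%N by rewrite szX.
    case: (ltngtP e e') => h; last by rewrite h eqxx in ne.
    + apply: le_trans (lam_le_dist h (ltn_trans e'c cX)).
      apply: (lam_mono fX sX) => //; [exact: leq_ltn_trans h | exact: ltnW].
    + rewrite edistC; apply: le_trans (lam_le_dist h (ltn_trans ec cX)).
      apply: (lam_mono fX sX) => //; [exact: leq_ltn_trans h | exact: ltnW].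
have Hnat : (size run <= n * M0 ^ d)%N := leq_trans Hle HS.
rewrite /wspd_size.
apply: (le_trans (y := (n * M0 ^ d)%N%:R)); first by rewrite ler_nat.
have HM : M0%:R <= 57 * d%:R * s.
  have := truncn_itv B0; rewrite /M0 -natr1 => /andP [h _].
  have D1 : 1 <= d%:R :> R by rewrite ler1n.
  rewrite /B in h *; nra.
rewrite natrM natrX.
have -> : (57 * d%:R) ^+ d * n%:R * s ^+ d = n%:R * (57 * d%:R * s) ^+ d.
  rewrite [in RHS]exprMn; set a := ((57 * d%:R : R) ^+ d); set b := s ^+ d; ring.
apply: ler_wpM2l; first exact: ler0n.
apply: lerXn2r => //; rewrite nnegrE ?ler0n //.
apply: le_trans HM; exact: ler0n.
Qed.
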